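(* Let $U_1,\dots,U_d$ be left-orthogonal TT cores with left interface matrices $X_{\le k}$, and let $\delta V_1,\dots,\delta V_d$ be cores of the same sizes satisfying $(\delta V_k^L)^\top U_k^L=0$ for all $k\in[d-1]$, with variational interface matrices $V_{\le k}$. Then $V_{\le k}^\top X_{\le k}=0$ for all $k\in[d-1]$.
   Context: Fix $d\ge2$, positive integers $n_1,\dots,n_d$, $r_0=r_d=1$, $r_1,\dots,r_{d-1}\ge1$. Cores $U_k,\delta V_k\in\mathbb R^{r_{k-1}\times n_k\times r_k}$. For $U\in\mathbb R^{a\times n\times b}$, $U^L\in\mathbb R^{an\times b}$ has entry $U(\alpha,i,\beta)$ at row $\alpha+(i-1)a$, column $\beta$. Left-orthogonal: $(U_k^L)^\top U_k^L=I_{r_k}$ for $k\in[d-1]$. Interface matrices: $X_{\le0}=1$, $X_{\le k}=(I_{n_k}\otimes X_{\le k-1})U_k^L$. Variational interface matrices: $V_{\le0}=0$, $V_{\le k}=(I_{n_k}\otimes V_{\le k-1})U_k^L+(I_{n_k}\otimes X_{\le k-1})\delta V_k^L$. *)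

(* Defs.v *)
From HB Require Import structures.
From mathcomp Require Import all_boot all_order all_algebra.
From mathcomp Require Export mxtens.
Set Implicit Arguments. Unset Strict Implicit. Unset Printing Implicit Defensive.
Import GRing.Theory Num.Theory.
Local Open Scope ring_scope.

Definition core (R : Type) (a n b : nat) := 'I_a -> 'I_n -> 'I_b -> R.

(* Left unfolding U^L in R^{an x b}: entry U(alpha,i,beta) at row
   alpha + i*a (0-based), column beta.  We use the row-index type
   'I_(n * a), whose index i*a + alpha is mxtens_index (i, alpha). *)
Definition unfoldL (R : Type) (a n b : nat) (U : core R a n b) : 'M[R]_(n * a, b) :=
  \matrix_(row, beta) U (mxtens_unindex row).2 (mxtens_unindex row).1 beta.

(* Number of rows of X_{<= k}: n_1 * ... * n_k (with the product order
   n_k * (n_{k-1} * ...) matching I_{n_k} (x) X_{<= k-1}). *)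
Fixpoint rowdim (n : nat -> nat) (k : nat) : nat :=
  match k with 0 => 1%N | k'.+1 => (n k'.+1 * rowdim n k')%N end.

(* Interface matrices: X_{<=0} = 1 (a 1 x r_0 matrix; r_0 = 1 is a
   hypothesis of the theorem), X_{<=k} = (I_{n_k} (x) X_{<=k-1}) U_k^L. *)
Fixpoint Xle (R : pzRingType) (n r : nat -> nat)
    (U : forall k, core R (r k.-1) (n k) (r k)) (k : nat) : 'M[R]_(rowdim n k, r k) :=
  match k with
  | 0 => const_mx 1
  | k'.+1 => ((1%:M : 'M[R]_(n k'.+1)) *t Xle U k') *m unfoldL (U k'.+1)
  end.

Fixpoint Vle (R : pzRingType) (n r : nat -> nat)
    (U dV : forall k, core R (r k.-1) (n k) (r k)) (k : nat)
    : 'M[R]_(rowdim n k, r k) :=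
  match k with
  | 0 => 0
  | k'.+1 => ((1%:M : 'M[R]_(n k'.+1)) *t Vle U dV k') *m unfoldL (U k'.+1)
           + ((1%:M : 'M[R]_(n k'.+1)) *t Xle U k') *m unfoldL (dV k'.+1)
  end.

(* Main.v *)
Require Import Defs.
From mathcomp Require Import all_boot all_order all_algebra.
Import GRing.Theory Num.Theory.
Local Open Scope ring_scope.

Lemma tens11 (R : comPzRingType) a b :
  (1%:M : 'M[R]_a) *t (1%:M : 'M[R]_b) = 1%:M.
Proof.
apply/matrixP=> i j.
case: (mxtens_indexP i)=> i0 i1; case: (mxtens_indexP j)=> j0 j1.
rewrite tensmxE !mxE.
have -> : (mxtens_index (i0, i1) == mxtens_index (j0, j1)) = ((i0, i1) == (j0, j1)).
  by apply/eqP/eqP=> [/(can_inj (@mxtens_indexK _ _))|->].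
rewrite xpair_eqE.
by case: (i0 == j0); case: (i1 == j1); rewrite ?mulr1n ?mulr0n ?mulr1 ?mulr0.
Qed.

Lemma tens_form (R : comPzRingType) q p m m' s t (A : 'M[R]_(p, m)) (B : 'M[R]_(p, m'))
  (C : 'M[R]_(q * m, s)) (D : 'M[R]_(q * m', t)) :
  ((1%:M : 'M[R]_q) *t A *m C)^T *m ((1%:M : 'M[R]_q) *t B *m D)
  = C^T *m ((1%:M : 'M[R]_q) *t (A^T *m B)) *m D.
Proof.
rewrite trmx_mul trmx_tens trmx1 !mulmxA -[C^T *m (_ *t A^T) *m _]mulmxA tensmx_mul mul1mx.
by [].
Qed.

Theorem lemma18 (R : realFieldType) (d : nat) (n r : nat -> nat)
    (U dV : forall k : nat, core R (r k.-1) (n k) (r k)) :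
  (2 <= d)%N ->
  (forall k, (1 <= k <= d)%N -> (1 <= n k)%N) ->
  r 0%N = 1%N -> r d = 1%N ->
  (forall k, (1 <= k <= d.-1)%N -> (1 <= r k)%N) ->
  (forall k, (1 <= k <= d.-1)%N ->
     (unfoldL (U k))^T *m unfoldL (U k) = 1%:M) ->
  (forall k, (1 <= k <= d.-1)%N ->
     (unfoldL (dV k))^T *m unfoldL (U k) = 0) ->
  forall k, (1 <= k <= d.-1)%N -> (Vle U dV k)^T *m Xle U k = 0.
Proof.
move=> _ _ r0 _ _ HU HdV.
suff H : forall k, (k <= d.-1)%N ->
  (Xle U k)^T *m Xle U k = 1%:M /\ (Vle U dV k)^T *m Xle U k = 0.
  by move=> k /andP[_ /H[]].
elim=> [|k IH] Hk /=.
  split; last by rewrite trmx0 mul0mx.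
  apply/matrixP=> i j; rewrite !mxE big_ord1 !mxE mulr1.
  have -> : i = j.
    apply: val_inj.
    have hi : (i < 1)%N := eq_ind _ (fun m => (i < m)%N) (ltn_ord i) _ r0.
    have hj : (j < 1)%N := eq_ind _ (fun m => (j < m)%N) (ltn_ord j) _ r0.
    change (nat_of_ord i = nat_of_ord j); by move: hi hj; rewrite !ltnS !leqn0 => /eqP-> /eqP->.
  by rewrite eqxx.
have [IX IV] := IH (ltnW Hk).
have Hk' : (1 <= k.+1 <= d.-1)%N by rewrite Hk.
split.
  by rewrite tens_form IX tens11 mulmx1 (HU _ Hk').
rewrite linearD mulmxDl !tens_form IV IX tensmx0 mulmx0 mul0mx add0r tens11 mulmx1 (HdV _ Hk').
by [].
Qed.
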